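(* Let $\hat{x}$ be the final value of the vector $x$ in Algorithm 1 and let $OPT$ be a set maximizing $f$ among subsets of $N$ of size at most $k$. If $\|\hat{x}\|_1<k$, then $F(\hat{x}+\mathbf{1}_{OPT\setminus\mathrm{supp}(\hat{x})})\ge(1-p)\cdot\big[p\cdot f(OPT)+(1-p)\cdot f(OPT\setminus\mathrm{supp}(\hat{x}))\big]$.
   Context: Setting: finite ground set $N$ whose elements arrive one at a time in a stream, non-negative submodular $f\colon 2^N\to\mathbb{R}_{\ge 0}$, positive integer $k$. $\mathbf{1}_A$ is the characteristic vector of $A$. $F$ is the multilinear extension of $f$: $F(x)=\sum_{A\subseteq N} f(A)\prod_{u\in A}x_u\prod_{u\notin A}(1-x_u)$ for $x\in[0,1]^N$, and $\partial_uF(x)=F(x\vee \mathbf{1}_u)-F(x\wedge\mathbf{1}_{N\setminus\{u\}})$ (coordinatewise max/min). $\mathrm{supp}(x)=\{u: x_u>0\}$. Algorithm 1 has parameters $p\in(0,1)$, $c>0$, $\alpha\in(0,1]$ and a number $\tau$. It starts with $x=\mathbf{0}$, and when an element $u$ arrives, if $\partial_uF(x)\ge c\tau/k$ it sets $x\leftarrow x+\min\{p,\,k-\|x\|_1\}\cdot\mathbf{1}_u$ (otherwise $x$ is unchanged). After the stream ends, it computes a random set $S_1$ with $|S_1|\le k$ and $\mathbb{E}[f(S_1)]\ge F(x)$, and a random set $S_2\subseteq\mathrm{supp}(x)$ with $|S_2|\le k$ and $\mathbb{E}[f(S_2)]\ge\alpha\cdot\max_{S\subseteq\mathrm{supp}(x),|S|\le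 k}f(S)$, and outputs the better of $S_1,S_2$. *)

(* Defs.v *)
From mathcomp Require Import all_boot all_order all_algebra.
Set Implicit Arguments. Unset Strict Implicit. Unset Printing Implicit Defensive.
Import Order.TTheory GRing.Theory Num.Theory.
Local Open Scope ring_scope.

Section Defs.
Variables (R : realFieldType) (T : finType).

Definition nonneg_setfun (f : {set T} -> R) := forall A, 0 <= f A.
Definition submodular (f : {set T} -> R) :=
  forall A B : {set T}, f (A :|: B) + f (A :&: B) <= f A + f B.

Definition indic (A : {set T}) : T -> R := fun u => if u \in A then 1 else 0.

Definition multilin (f : {set T} -> R) (x : T -> R) : R :=
  \sum_(A : {set T}) f A * (\prod_(u in A) x u) * (\prod_(u in ~: A) (1 - x u)).

Definition pderiv (f : {set T} -> R) (x : T -> R) (u : T) : R :=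
  multilin f (fun v => Num.max (x v) (indic [set u] v))
  - multilin f (fun v => Num.min (x v) (indic (~: [set u]) v)).

Definition norm1 (x : T -> R) : R := \sum_(u : T) `|x u|.
Definition supp (x : T -> R) : {set T} := [set u | 0 < x u].

Definition vadd (x y : T -> R) : T -> R := fun u => x u + y u.

Definition alg1_step (f : {set T} -> R) (k : nat) (p c tau : R)
    (x : T -> R) (u : T) : T -> R :=
  if c * tau / k%:R <= pderiv f x u
  then vadd x (fun v => Num.min p (k%:R - norm1 x) * indic [set u] v)
  else x.

Definition alg1_x (f : {set T} -> R) (k : nat) (p c tau : R) (s : seq T)
  : T -> R := foldl (alg1_step f k p c tau) (fun _ => 0) s.

End Defs.

(* Main.v *)
Require Import Defs.
From mathcomp Require Import all_boot all_order all_algebra.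
From mathcomp Require Import ring lra.
Set Implicit Arguments. Unset Strict Implicit. Unset Printing Implicit Defensive.
Import Order.TTheory GRing.Theory Num.Theory.
Local Open Scope ring_scope.

Section Aux.
Variables (R : realFieldType) (T : finType).

Fixpoint Ex (p : R) (l : seq T) (g : {set T} -> R) : R :=
  match l with
  | [::] => g set0
  | u :: l' => p * Ex p l' (fun Z => g (u |: Z)) + (1 - p) * Ex p l' g
  end.

Lemma eq_Ex p l g h : (forall Z, g Z = h Z) -> Ex p l g = Ex p l h.
Proof.
elim: l g h => [|u l IH] g h E /=; first by [].
by rewrite (IH _ (fun Z => h (u |: Z))) // (IH g h).
Qed.

Lemma Ex_le p l g h : 0 <= p <= 1 -> (forall Z, g Z <= h Z) -> Ex p l g <= Ex p l h.
Proof.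
move=> /andP[p0 p1]; elim: l g h => [|u l IH] g h E /=; first by [].
apply: lerD; apply: ler_wpM2l; rewrite ?subr_ge0 //; exact: IH.
Qed.

Lemma Ex_add p l g h : Ex p l (fun Z => g Z + h Z) = Ex p l g + Ex p l h.
Proof.
elim: l g h => [|u l IH] g h //=.
rewrite (IH (fun Z => g (u |: Z)) (fun Z => h (u |: Z))) IH; ring.
Qed.

Lemma Ex_ge0 p l g : 0 <= p <= 1 -> (forall Z, 0 <= g Z) -> 0 <= Ex p l g.
Proof.
move=> /andP[p0 p1]; elim: l g => [|u l IH] g E /=; first by [].
apply: addr_ge0; apply: mulr_ge0; rewrite ?subr_ge0 //; exact: IH.
Qed.

Lemma Ex_cat p l1 l2 g :
  Ex p (l1 ++ l2) g = Ex p l1 (fun Z => Ex p l2 (fun W => g (Z :|: W))).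
Proof.
elim: l1 g => [|u l1 IH] g /=.
  by apply: eq_Ex => W; rewrite set0U.
rewrite !IH; congr (_ * _ + _ * _); apply: eq_Ex => Z; apply: eq_Ex => W.
by rewrite setUA.
Qed.

Lemma submod_shift (g : {set T} -> R) B :
  submodular g -> submodular (fun W => g (B :|: W)).
Proof.
move=> sg X Y /=.
have := sg (B :|: X) (B :|: Y).
have -> : (B :|: X) :|: (B :|: Y) = B :|: (X :|: Y).
  by apply/setP => v; rewrite !inE; do ! case: (_ \in _).
have -> : (B :|: X) :&: (B :|: Y) = B :|: (X :&: Y).
  by apply/setP => v; rewrite !inE; do ! case: (_ \in _).
by [].
Qed.

Lemma submod_Ex p l (g : {set T} -> R) : 0 <= p <= 1 ->
  submodular g -> submodular (fun Z => Ex p l (fun W => g (Z :|: W))).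
Proof.
move=> hp sg X Y /=.
rewrite -!Ex_add; apply: Ex_le => // W.
have := sg (X :|: W) (Y :|: W).
have -> : (X :|: W) :|: (Y :|: W) = (X :|: Y) :|: W.
  by apply/setP => v; rewrite !inE; do ! case: (_ \in _).
have -> : (X :|: W) :&: (Y :|: W) = (X :&: Y) :|: W.
  by apply/setP => v; rewrite !inE; do ! case: (_ \in _).
by [].
Qed.

Lemma Ex_L p l g : 0 <= p <= 1 -> submodular g -> uniq l ->
  (1 - p) * g set0 + p * g [set v in l] <= Ex p l g.
Proof.
move=> hp; have /andP[p0 p1] := hp.
elim: l g => [|u l IH] g sg /=.
  move=> _; have -> : [set v in [::]] = set0 :> {set T} by apply/setP => v; rewrite !inE.
  by rewrite mulrBl mul1r subrK.
move=> /andP[ul ul'].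
have h1 := IH _ (submod_shift [set u] sg) ul'.
have h2 := IH _ sg ul'.
have h3 := sg [set u] [set v in l].
rewrite /= setU0 in h1.
have E1 : [set u] :|: [set v in l] = [set v in u :: l].
  by apply/setP => v; rewrite !inE.
have E2 : [set u] :&: [set v in l] = set0.
  apply/setP => v; rewrite !inE; case: eqVneq => // ->; by rewrite (negbTE ul).
rewrite E1 E2 in h3. rewrite E1 in h1.
have q0 : 0 <= 1 - p by rewrite subr_ge0.
have := ler_wpM2l p0 h1; have := ler_wpM2l q0 h2; have := ler_wpM2l (mulr_ge0 p0 q0) h3.
move: (Ex p l g) (Ex p l (fun Z => g (u |: Z))) => a b.
nra.
Qed.


Lemma Ex_shift_ge p l (g : {set T} -> R) Z0 : 0 <= p <= 1 ->
  nonneg_setfun g -> submodular g -> uniq l ->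
  (1 - p) * g Z0 <= Ex p l (fun W => g (Z0 :|: W)).
Proof.
move=> hp g0 sg ul; have /andP[p0 p1] := hp.
have := Ex_L hp (submod_shift Z0 sg) ul.
rewrite /= setU0 => h; apply: le_trans h; rewrite lerDl.
exact: mulr_ge0.
Qed.

Lemma Ex_M p l1 l2 (g : {set T} -> R) : 0 <= p <= 1 ->
  nonneg_setfun g -> submodular g -> uniq (l1 ++ l2) ->
  p * (1 - p) * g [set v in l1] + (1 - p) ^+ 2 * g set0 <= Ex p (l1 ++ l2) g.
Proof.
move=> hp g0 sg; have /andP[p0 p1] := hp.
rewrite cat_uniq => /and3P[u1 _ u2].
rewrite Ex_cat.
have h := Ex_L hp (submod_Ex l2 hp sg) u1.
apply: le_trans h => /=.
have q0 : 0 <= 1 - p by rewrite subr_ge0.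
have hA := Ex_shift_ge set0 hp g0 sg u2.
have hB := Ex_shift_ge [set v in l1] hp g0 sg u2.
have := ler_wpM2l p0 hB; have := ler_wpM2l q0 hA.
move: (Ex p l2 (fun W => g (set0 :|: W))) (Ex p l2 (fun W => g ([set v in l1] :|: W))) => a b.
nra.
Qed.

Definition upd (x : T -> R) u (a : R) : T -> R := fun v => if v == u then a else x v.

Lemma eq_multilin (f : {set T} -> R) x y : (forall v, x v = y v) -> multilin f x = multilin f y.
Proof.
move=> E; rewrite /multilin; apply: eq_bigr => X _.
by congr (_ * _ * _); apply: eq_bigr => v _; rewrite E.
Qed.

Lemma multilin_split (f : {set T} -> R) x u :
  multilin f x = x u * multilin f (upd x u 1) + (1 - x u) * multilin f (upd x u 0).
Proof.
rewrite /multilin !mulr_sumr -big_split; apply: eq_bigr => X _ /=.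
case uX: (u \in X).
  have A1 : \prod_(v in X) upd x u 1 v = \prod_(v in X | v != u) x v.
    rewrite (bigD1 u uX) /= {1}/upd eqxx mul1r.
    by apply: eq_bigr => v /andP[_ /negbTE nv]; rewrite /upd nv.
  have A0 : \prod_(v in X) upd x u 0 v = 0 by rewrite (bigD1 u uX) /= /upd eqxx mul0r.
  have Ax : \prod_(v in X) x v = x u * \prod_(v in X | v != u) x v by rewrite (bigD1 u uX).
  have C1 a : \prod_(v in ~: X) (1 - upd x u a v) = \prod_(v in ~: X) (1 - x v).
    by apply: eq_bigr => v; rewrite inE /upd; case: eqVneq => // ->; rewrite uX.
  rewrite Ax A1 A0 !C1; ring.
have uX' : u \in ~: X by rewrite inE uX.
have A1 : \prod_(v in ~: X) (1 - upd x u 0 v) = \prod_(v in ~: X | v != u) (1 - x v).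
  rewrite (bigD1 u uX') /= {1}/upd eqxx subr0 mul1r.
  by apply: eq_bigr => v /andP[_ /negbTE nv]; rewrite /upd nv.
have A0 : \prod_(v in ~: X) (1 - upd x u 1 v) = 0 by rewrite (bigD1 u uX') /= /upd eqxx subrr mul0r.
have Ax : \prod_(v in ~: X) (1 - x v) = (1 - x u) * \prod_(v in ~: X | v != u) (1 - x v).
  by rewrite (bigD1 u uX').
have C1 a : \prod_(v in X) upd x u a v = \prod_(v in X) x v.
  by apply: eq_bigr => v; rewrite /upd; case: eqVneq => // ->; rewrite uX.
rewrite Ax A1 A0 !C1; ring.
Qed.

Lemma multilin_indic (f : {set T} -> R) x (A : {set T}) :
  (forall v, x v = if v \in A then 1 else 0) -> multilin f x = f A.
Proof.
move=> E.
have P1 : \prod_(v in A) x v = 1 by apply: big1 => v vA; rewrite E vA.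
have P2 : \prod_(v in ~: A) (1 - x v) = 1.
  by apply: big1 => v; rewrite inE E => /negbTE ->; rewrite subr0.
rewrite /multilin (bigD1 A) //= [X in _ + X]big1; first by rewrite addr0 P1 P2 !mulr1.
move=> X XA.
have [sXA|] := boolP (X \subset A).
  have : ~~ (A \subset X) by apply: contra XA => sAX; rewrite eqEsubset sXA sAX.
  case/subsetPn => v vA vX.
  have vX' : v \in ~: X by rewrite inE.
  by rewrite [X in _ * X](bigD1 v vX') /= E vA subrr mul0r mulr0.
case/subsetPn => v vX vA.
by rewrite (bigD1 v vX) /= E (negbTE vA) mul0r mulr0 mul0r.
Qed.

Lemma conv (f : {set T} -> R) p l : uniq l -> forall (A : {set T}) x,
  (forall v, v \in l -> v \notin A) ->
  (forall v, v \in l -> x v = p) ->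
  (forall v, v \notin l -> x v = if v \in A then 1 else 0) ->
  multilin f x = Ex p l (fun Z => f (A :|: Z)).
Proof.
elim: l => [|u l IH] /=.
  by move=> _ A x _ _ E; rewrite setU0; apply: multilin_indic => v; apply: E.
move=> /andP[ul ul'] A x dA xp xo.
rewrite (multilin_split f x u) xp ?mem_head //.
rewrite (IH ul' (u |: A) (upd x u 1)); first last.
- move=> v vl; rewrite /upd !inE; case: eqVneq => [->|nvu]; first by [].
  by rewrite /= xo // inE negb_or nvu vl.
- move=> v vl; rewrite /upd; case: eqVneq => [ev|nvu]; first by subst; rewrite vl in ul.
  by apply: xp; rewrite inE vl orbT.
- move=> v vl; rewrite !inE negb_or dA ?inE ?vl ?orbT // andbT.
  by apply: contra ul => /eqP <-.
rewrite (IH ul' A (upd x u 0)); first last.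
- move=> v vl; rewrite /upd; case: eqVneq => [->|nvu].
    by rewrite (negbTE (dA u (mem_head _ _))).
  by rewrite xo // inE negb_or nvu vl.
- move=> v vl; rewrite /upd; case: eqVneq => [ev|nvu]; first by subst; rewrite vl in ul.
  by apply: xp; rewrite inE vl orbT.
- by move=> v vl; apply: dA; rewrite inE vl orbT.
congr (_ * _ + _); apply: eq_Ex => Z.
by rewrite setUCA setUA.
Qed.


End Aux.

Section Alg.
Variables (R : realFieldType) (T : finType) (f : {set T} -> R) (k : nat) (p c tau : R).
Hypothesis p0 : 0 < p.

Definition amt (x : T -> R) (u : T) : R :=
  if c * tau / k%:R <= pderiv f x u then Num.min p (k%:R - norm1 x) else 0.

Lemma step_val x u v :
  alg1_step f k p c tau x u v = x v + amt x u * @indic R T [set u] v.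
Proof. by rewrite /alg1_step /amt; case: ifP => _ //; rewrite mul0r addr0. Qed.

Lemma amt_ge0 x u : norm1 x <= k%:R -> 0 <= amt x u.
Proof.
move=> h; rewrite /amt; case: ifP => _ //.
rewrite minEle; case: ifP => _; [exact: ltW | by rewrite subr_ge0].
Qed.

Lemma amt_le x u : norm1 x <= k%:R -> amt x u <= k%:R - norm1 x.
Proof.
move=> h; rewrite /amt; case: ifP => _; last by rewrite subr_ge0.
by rewrite minEle; case: ifP => // /negbT; rewrite -ltNge => /ltW.
Qed.

Lemma norm_step x u : (forall v, 0 <= x v) -> norm1 x <= k%:R ->
  norm1 (alg1_step f k p c tau x u) = norm1 x + amt x u.
Proof.
move=> x0 h; have a0 := amt_ge0 u h.
rewrite /norm1 (eq_bigr (fun v => x v + amt x u * @indic R T [set u] v)); last first.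
  move=> v _; rewrite step_val ger0_norm // addr_ge0 // mulr_ge0 //.
  by rewrite /indic; case: ifP.
rewrite big_split /=; congr (_ + _).
  by apply: eq_bigr => v _; rewrite ger0_norm.
rewrite (bigD1 u) //= big1 ?addr0; first by rewrite /indic in_set1 eqxx mulr1.
by move=> v /negbTE nv; rewrite /indic in_set1 nv mulr0.
Qed.

Lemma step_inv x u : (forall v, 0 <= x v) -> norm1 x <= k%:R ->
  (forall v, 0 <= alg1_step f k p c tau x u v) /\ norm1 (alg1_step f k p c tau x u) <= k%:R.
Proof.
move=> x0 h; split.
  move=> v; rewrite step_val addr_ge0 // mulr_ge0 ?amt_ge0 //.
  by rewrite /indic; case: ifP.
rewrite norm_step //; have := amt_le u h; lra.
Qed.

Lemma mono t : forall x, (forall v, 0 <= x v) -> norm1 x <= k%:R ->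
  norm1 x <= norm1 (foldl (alg1_step f k p c tau) x t).
Proof.
elim: t => [|u t IH] x x0 h /=; first by [].
have [h1 h2] := step_inv u x0 h.
apply: le_trans (IH _ h1 h2).
rewrite norm_step // lerDl; exact: amt_ge0.
Qed.

Lemma run t : uniq t -> forall x, (forall v, 0 <= x v) -> norm1 x <= k%:R ->
  (forall v, v \in t -> x v = 0) -> (forall v, x v = 0 \/ x v = p) ->
  norm1 (foldl (alg1_step f k p c tau) x t) < k%:R ->
  forall v, foldl (alg1_step f k p c tau) x t v = 0 \/ foldl (alg1_step f k p c tau) x t v = p.
Proof.
elim: t => [|u t IH] /=; first by move=> _ x _ _ _ h _.
move=> /andP[ut ut'] x x0 h xt x0p fin.
have [h1 h2] := step_inv u x0 h.
apply: IH => //.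
- move=> v vt; rewrite step_val xt ?inE ?vt ?orbT // /indic in_set1.
  by case: eqVneq => [ev|_]; [by subst; rewrite vt in ut | rewrite mulr0 addr0].
- move=> v; rewrite step_val /indic in_set1; case: eqVneq => [->|_]; last first.
    by rewrite mulr0 addr0.
  rewrite mulr1 xt ?mem_head // add0r.
  have hm := mono t h1 h2.
  have hn := norm_step u x0 h.
  move: fin hm hn; rewrite /amt; case: ifP => _; last by left.
  rewrite minEle; case: ifP => _; first by right.
  move=> *; lra.
Qed.
End Alg.

Theorem lemma3p4 (R : realFieldType) (T : finType) (f : {set T} -> R)
  (k : nat) (p c tau : R) (s : seq T) (OPT : {set T}) :
  nonneg_setfun f -> submodular f -> (0 < k)%N ->
  0 < p < 1 -> 0 < c ->
  perm_eq s (enum T) ->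
  (#|OPT| <= k)%N -> (forall S : {set T}, (#|S| <= k)%N -> f S <= f OPT) ->
  let xh := alg1_x f k p c tau s in
  norm1 xh < k%:R ->
  multilin f (vadd xh (@indic R T (OPT :\: supp xh)))
    >= (1 - p) * (p * f OPT + (1 - p) * f (OPT :\: supp xh)).
Proof.
move=> g0 sg k0 /andP[p0 p1] c0 ps _ _ xh fin.
have us : uniq s by rewrite (perm_uniq ps) enum_uniq.
have vals : forall v, xh v = 0 \/ xh v = p.
  apply: (run p0 us) => //.
  - rewrite /norm1 big1 ?ler0n // => v _; exact: normr0.
  - by move=> v; left.
have mS : forall v, (v \in supp xh) = (xh v == p).
  move=> v; rewrite inE; case: (vals v) => ->; last by rewrite p0 eqxx.
  by rewrite ltxx eq_sym (gt_eqF p0).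
set S := supp xh in mS *; clearbody S.
set A := OPT :\: S.
set B := OPT :&: S.
have ul : uniq (enum B ++ enum (S :\: B)).
  rewrite cat_uniq !enum_uniq /= andbT; apply/hasPn => v.
  by rewrite !mem_enum !inE => /andP[/negbTE -> _].
have ml : forall v, (v \in enum B ++ enum (S :\: B)) = (v \in S).
  move=> v; rewrite mem_cat !mem_enum !inE.
  by case: (v \in OPT); case: (v \in S).
have hp : 0 <= p <= 1 by rewrite (ltW p0) (ltW p1).
rewrite (@conv R T f p _ ul A); first last.
- move=> v; rewrite ml => vS; rewrite /vadd /indic.
  have : xh v = 0 by case: (vals v) => // /eqP; rewrite -mS (negbTE vS).
  by move=> ->; rewrite add0r.
- move=> v; rewrite ml => vS; rewrite /vadd /indic.
  by rewrite /A inE vS /= addr0; apply/eqP; rewrite -mS.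
- by move=> v; rewrite ml => vS; rewrite /A inE vS.
have gn : nonneg_setfun (fun Z => f (A :|: Z)) by move=> Z; exact: g0.
have := Ex_M hp gn (submod_shift A sg) ul.
have -> : [set v in enum B] = B by apply/setP => v; rewrite inE mem_enum.
have -> : A :|: B = OPT.
  by apply/setP => v; rewrite !inE; case: (v \in OPT); case: (v \in S).
rewrite setU0 => h; apply: le_trans h.
by rewrite le_eqVlt; apply/orP; left; apply/eqP; ring.
Qed.
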